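(* Let $m,n,k$ be positive integers. Let $X_1,X_2,\ldots,X_k$ be pairwise disjoint subsets of $[m]$ and let $Y_1,Y_2,\ldots,Y_k$ be subsets of $[n]$. Label all functions $f:[m]\to[n]$ arbitrarily as $f_1,f_2,\ldots,f_{n^m}$, and form the $k\times n^m$ matrix $B=(b_{ij})$ with $b_{ij}=1$ if $f_j(X_i)=Y_i$ and $b_{ij}=0$ otherwise. Then the number $N$ of columns of $B$ all of whose entries are $0$ is $$N=\sum_{I\subseteq [k]}(-1)^{|I|}B(I),\qquad\text{where}\qquad B(I)=n^{|[m]\setminus \bigcup_{i\in I}X_i|}\cdot \prod_{i\in I}|Y_i|!\,S(|X_i|,|Y_i|),$$ and the sum runs over all subsets $I$ of $[k]$.
   Context: $[n]=\{1,\ldots,n\}$; $|X|$ is the cardinality of $X$; $S(a,b)$ denotes the Stirling number of the second kind. *)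

(* Defs.v *)
From mathcomp Require Import all_boot all_order all_algebra.
Set Implicit Arguments. Unset Strict Implicit. Unset Printing Implicit Defensive.

Fixpoint stirling2 (a b : nat) : nat :=
  match a, b with
  | 0, 0 => 1
  | 0, _.+1 => 0
  | _.+1, 0 => 0
  | a'.+1, b'.+1 => b'.+1 * stirling2 a' b'.+1 + stirling2 a' b'
  end.

Definition Bmat (m n k : nat) (X : 'I_k -> {set 'I_m}) (Y : 'I_k -> {set 'I_n})
  (lab : 'I_(n ^ m) -> {ffun 'I_m -> 'I_n}) : 'M[nat]_(k, n ^ m) :=
  \matrix_(i < k, j < n ^ m) (if lab j @: X i == Y i then 1%N else 0%N).

Definition BI (m n k : nat) (X : 'I_k -> {set 'I_m}) (Y : 'I_k -> {set 'I_n})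
  (I : {set 'I_k}) : nat :=
  n ^ #|~: \bigcup_(i in I) X i| * \prod_(i in I) (#|Y i|`! * stirling2 #|X i| #|Y i|).

(* Main.v *)
Require Import Defs.
From mathcomp Require Import all_boot all_order all_algebra ring.
Import GRing.Theory.
Set Implicit Arguments. Unset Strict Implicit. Unset Printing Implicit Defensive.

Section Split.
Variables (T R : finType) (r0 : R).

Definition Zs (E : {set T}) : {set {ffun T -> R}} :=
  [set f : {ffun T -> R} | [forall x in E, f x == r0]].
Definition rs (D : {set T}) (f : {ffun T -> R}) : {ffun T -> R} :=
  [ffun x => if x \in D then f x else r0].

Lemma cardZ E : #|Zs E| = #|R| ^ #|~: E|.
Proof.
rewrite -(card_pffun_on r0 (~: E) R); apply: eq_card => f.
rewrite inE; apply/forall_inP/pffun_onP => [H|[/supportP H _] x xE].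
  split; last by move=> y _.
  apply/supportP => x; rewrite inE negbK => /H /eqP //.
by apply/eqP/H; rewrite inE xE.
Qed.

Lemma split_card D (P Q : pred {ffun T -> R})
  (HP : forall f, P f = P (rs D f)) (HQ : forall f, Q f = Q (rs (~: D) f)) :
  #|[set f | P f && Q f]| =
  #|[set g in Zs (~: D) | P g]| * #|[set h in Zs D | Q h]|.
Proof.
rewrite -cardsX.
have inj : injective (fun f => (rs D f, rs (~: D) f)).
  move=> f f' [E1 E2]; apply/ffunP => x.
  case xD: (x \in D).
    by have := congr1 (fun g : {ffun T -> R} => g x) E1; rewrite !ffunE xD.
  by have := congr1 (fun g : {ffun T -> R} => g x) E2; rewrite !ffunE inE xD.
rewrite -(card_imset _ inj); apply: eq_card => -[g h].
rewrite !inE /=; apply/imsetP/andP => [[f]|].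
  rewrite inE => /andP[Pf Qf] [-> ->]; rewrite -HP -HQ Pf Qf !andbT.
  split.
    by apply/forall_inP => x; rewrite inE ffunE => /negbTE ->.
  by apply/forall_inP => x xD; rewrite ffunE inE xD.
move=> -[/andP[/forall_inP Hg Pg] /andP[/forall_inP Hh Qh]].
pose f := [ffun x => if x \in D then g x else h x].
have Eg : rs D f = g.
  apply/ffunP => x; rewrite !ffunE; case xD: (x \in D) => //.
  by apply/esym/eqP; apply: Hg; rewrite inE xD.
have Eh : rs (~: D) f = h.
  apply/ffunP => x; rewrite !ffunE inE; case xD: (x \in D) => //=.
  by apply/esym/eqP; apply: Hh.
exists f; last by rewrite Eg Eh.
rewrite inE; apply/andP; split; [rewrite HP Eg | rewrite HQ Eh] => //.
Qed.

End Split.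

Section Surj.
Variables (T R : finType) (r0 : R).

Definition surj (A : {set T}) (B : {set R}) :=
  #|[set g in Zs r0 (~: A) | g @: A == B]|.

Lemma set1U_eq (y : R) S B :
  (y |: S == B) = (y \in B) && ((S == B) || (S == B :\ y)).
Proof.
apply/eqP/andP => [<-|[yB /orP[/eqP->|/eqP->]]].
  rewrite setU11; split => //.
  case yS: (y \in S).
    suff -> : y |: S = S by rewrite eqxx.
    by apply/setP => z; rewrite !inE; case: eqP => // ->.
  by rewrite setU1K ?yS // eqxx orbT.
  by apply/setP => z; rewrite !inE; case: eqP => // ->.
exact: setD1K.
Qed.

Lemma card_part (S : {set {ffun T -> R}}) x :
  #|S| = \sum_y #|[set g in S | g x == y]|.
Proof.
rewrite -sum1_card (partition_big (fun g : {ffun T -> R} => g x) predT) //=.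
by apply: eq_bigr => y _; rewrite -sum1dep_card.
Qed.

Lemma surj_step (A : {set T}) x (y : R) (B : {set R}) : x \notin A ->
  #|[set g in Zs r0 (~: (x |: A)) | (g @: (x |: A) == B) && (g x == y)]| =
  (y \in B) * (surj A B + surj A (B :\ y)).
Proof.
move=> xA.
pose Q := fun h : {ffun T -> R} =>
  [&& [forall z in ~: (x |: A), h z == r0],
      (h @: A == B) || (h @: A == B :\ y) & y \in B].
have -> : [set g in Zs r0 (~: (x |: A)) | (g @: (x |: A) == B) && (g x == y)]
    = [set g : {ffun T -> R} | (g x == y) && Q g].
  apply/setP => g; rewrite !inE /Q.
  case gx: (g x == y); last by rewrite !andbF.
  by rewrite imsetU1 (eqP gx) set1U_eq andbT [(y \in B) && _]andbC.
have HZ : forall h : {ffun T -> R},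
    [forall z in [set x], h z == r0] && [forall z in ~: (x |: A), h z == r0]
    = [forall z in ~: A, h z == r0].
  move=> h; apply/andP/forall_inP => [[/forall_inP H1 /forall_inP H2] z|H].
    rewrite !inE => zA; case: (z =P x) => [->|/eqP zx].
      by apply: H1; rewrite inE.
    by apply: H2; rewrite !inE negb_or zx zA.
  split; apply/forall_inP => z; rewrite !inE.
    by move/eqP->; apply: H; rewrite inE xA.
  by rewrite negb_or => /andP[_ zA]; apply: H; rewrite inE zA.
rewrite (split_card (r0 := r0) (D := [set x])).
- have -> : #|[set g in Zs r0 (~: [set x]) | g x == y]| = 1.
    rewrite -(cards1 [ffun z => if z == x then y else r0]).
    apply: eq_card => g; rewrite !inE.
    apply/andP/eqP => [[/forall_inP H /eqP gx]|->].
      apply/ffunP => z; rewrite ffunE; case: eqP => [->//|/eqP zx].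
      by apply/eqP/H; rewrite !inE.
    rewrite ffunE eqxx; split => //.
    by apply/forall_inP => z; rewrite !inE ffunE => /negbTE ->.
  rewrite mul1n.
  case yB: (y \in B); last first.
    by apply: eq_card0 => h; rewrite !inE /Q yB !andbF.
  rewrite mul1n /surj -(cardsID [set h : {ffun T -> R} | h @: A == B]); congr (_ + _).
    apply: eq_card => h; rewrite !inE /Q yB.
    by rewrite andbT andbA HZ; case: (_ == B); rewrite ?andbF ?andbT.
  apply: eq_card => h; rewrite !inE /Q yB andbT.
  rewrite [X in _ && X]andbA HZ.
  case E: (h @: A == B) => /=.
    rewrite (eqP E).
    suff -> : (B == B :\ y) = false by rewrite andbF.
    apply/negbTE; apply/eqP => e; move: yB; rewrite {1}e setD11 //.
  congr (_ && _); apply: eq_forallb => z //.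
- by move=> f; rewrite !ffunE set11.
move=> f; rewrite /Q.
have E1 : [set rs r0 (~: [set x]) f z | z in A] = f @: A.
  apply: eq_in_imset => z zA; rewrite ffunE !inE.
  by case: eqP => // zx; move: xA; rewrite -zx zA.
rewrite E1; congr (_ && _).
apply: eq_forallb => z; rewrite !inE ffunE !inE.
by case: eqP.
Qed.

Lemma surjE (A : {set T}) (B : {set R}) :
  surj A B = #|B|`! * stirling2 #|A| #|B|.
Proof.
move Ha: #|A| => a; elim: a A B Ha => [|a IH] A B Ha.
  have -> : A = set0 by apply/eqP; rewrite -cards_eq0 Ha.
  rewrite /surj; case: (boolP (B == set0)) => [/eqP->|B0].
    rewrite cards0 /=.
    transitivity #|Zs r0 (~: (set0 : {set T}))|.
      by apply: eq_card => g; rewrite !inE imset0 eqxx andbT.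
    by rewrite cardZ setCK cards0.
  rewrite eq_card0; last first.
    by move=> g; rewrite !inE imset0 eq_sym (negbTE B0) andbF.
  move: B0; rewrite -cards_eq0; case: #|B| => // c _ /=; by rewrite muln0.
have : 0 < #|A| by rewrite Ha.
rewrite card_gt0 => /set0Pn[x xA].
have xA' : x \notin A :\ x by rewrite setD11.
have Ha' : #|A :\ x| = a by move: Ha; rewrite (cardsD1 x A) xA add1n => -[].
rewrite -(setD1K xA) /surj (card_part _ x).
transitivity (\sum_(y in B) (#|B|`! * stirling2 a #|B| +
                             (#|B|.-1)`! * stirling2 a #|B|.-1)).
  rewrite [RHS]big_mkcond; apply: eq_bigr => y _.
  rewrite (@eq_card _ _ [set g in Zs r0 (~: (x |: A :\ x)) |
       (g @: (x |: A :\ x) == B) && (g x == y)]); last first.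
    by move=> g; rewrite !inE andbA.
  rewrite surj_step // !IH //.
  case yB: (y \in B); rewrite ?mul1n ?mul0n //.
  by rewrite (cardsD1 y B) yB add1n.
rewrite sum_nat_const.
move: #|B| => b; case: b => [|c] /=; first by rewrite mul0n muln0.
rewrite factS; ring.
Qed.
End Surj.

Section Fam.
Variables (T R I : finType) (r0 : R) (X : I -> {set T}) (Y : I -> {set R}).
Hypothesis hdisj : forall i j, i != j -> [disjoint X i & X j].

Definition U (J : {set I}) := \bigcup_(i in J) X i.

Lemma forall_setD1 (J : {set I}) i (p : pred I) : i \in J ->
  [forall l in J, p l] = p i && [forall l in J :\ i, p l].
Proof.
move=> iJ; apply/forall_inP/andP => [H|[pi /forall_inP H] l lJ].
  split; first exact: H.
  by apply/forall_inP => l; rewrite inE => /andP[_ /H].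
by case: (l =P i) => [->//|/eqP li]; apply: H; rewrite !inE li lJ.
Qed.

Lemma disj_out (J : {set I}) i z : z \in X i -> z \notin U (J :\ i).
Proof.
move=> zi; apply/bigcupP => -[l]; rewrite !inE => /andP[li _] zl.
by have := disjointFr (hdisj li) zl; rewrite zi.
Qed.

Lemma famG (J : {set I}) :
  #|[set g in Zs r0 (~: U J) | [forall i in J, g @: X i == Y i]]| =
  \prod_(i in J) surj r0 (X i) (Y i).
Proof.
move Hj: #|J| => j; elim: j J Hj => [|j IH] J Hj.
  have -> : J = set0 by apply/eqP; rewrite -cards_eq0 Hj.
  rewrite big_set0 /U big_set0.
  transitivity #|Zs r0 (~: (set0 : {set T}))|; last by rewrite cardZ setCK cards0.
  apply: eq_card => g; rewrite !inE.
  suff -> : [forall i in set0, g @: X i == Y i] by rewrite andbT.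
  by apply/forall_inP => i; rewrite inE.
have : 0 < #|J| by rewrite Hj.
rewrite card_gt0 => /set0Pn[i iJ].
have Hj' : #|J :\ i| = j by move: Hj; rewrite (cardsD1 i J) iJ add1n => -[].
rewrite (big_setD1 i iJ) /= -(IH _ Hj').
have EU : U J = X i :|: U (J :\ i) by rewrite /U (big_setD1 i iJ).
pose Q := fun h : {ffun T -> R} =>
  [forall z in ~: (X i :|: U (J :\ i)), h z == r0] &&
  [forall l in J :\ i, h @: X l == Y l].
rewrite (@eq_card _ _ [set g : {ffun T -> R} | (g @: X i == Y i) && Q g]);
  last first.
  by move=> g; rewrite !inE EU (forall_setD1 _ iJ) /Q andbA [_ && (_ == _)]andbC andbA.
rewrite (split_card (r0 := r0) (D := X i)).
- congr (_ * _); apply: eq_card => h; rewrite !inE /Q andbA; congr (_ && _).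
  apply/andP/forall_inP => [[/forall_inP H1 /forall_inP H2] z|H].
    rewrite inE => zU; case zi: (z \in X i); first exact: H1.
    by apply: H2; rewrite !inE zi (negbTE zU).
  split; apply/forall_inP => z.
    by move=> zi; apply: H; rewrite inE disj_out.
  by rewrite !inE negb_or => /andP[_ zU]; apply: H; rewrite inE.
- move=> f; congr (_ == _); apply: eq_in_imset => z zi.
  by rewrite ffunE zi.
move=> f; rewrite /Q; congr (_ && _).
  apply: eq_forallb => z; rewrite !inE !ffunE !inE negb_or.
  by case: (z \in X i).
apply: eq_forallb => l; case lJ: (l \in J :\ i) => //=.
congr (_ == _); apply: eq_in_imset => z zl.
rewrite ffunE inE.
move: lJ; rewrite !inE => /andP[li _].
by rewrite (disjointFr (hdisj li) zl).
Qed.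

Lemma famF (J : {set I}) :
  #|[set f : {ffun T -> R} | [forall i in J, f @: X i == Y i]]| =
  #|R| ^ #|~: U J| * \prod_(i in J) surj r0 (X i) (Y i).
Proof.
rewrite (@eq_card _ _ [set f : {ffun T -> R} | [forall i in J, f @: X i == Y i] && true]);
  last by move=> f; rewrite !inE andbT.
rewrite (split_card (r0 := r0) (D := U J)) // ?famG.
- rewrite mulnC; congr (_ * _); rewrite -(cardZ r0); apply: eq_card => h.
  by rewrite !inE andbT.
move=> f; apply: eq_forallb => i; case iJ: (i \in J) => //=.
congr (_ == _); apply: eq_in_imset => z zi.
by rewrite ffunE (subsetP (bigcup_sup i iJ) z zi).
Qed.
End Fam.

Lemma incl_excl (I T : finType) (A : I -> pred T) :
  (#|[set x | [forall i, ~~ A i x]]|%:Z =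
   \sum_(J : {set I}) (-1) ^+ #|J| * #|[set x | [forall i in J, A i x]]|%:Z)%R.
Proof.
have cardE (P : pred T) : (#|[set x | P x]|%:Z = \sum_x ((P x)%:R : int))%R.
  rewrite -sum1dep_card -natz natr_sum [LHS]big_mkcond /=.
  by apply: eq_bigr => x _; case: (P x).
have prodE (J : {set I}) (b : I -> bool) :
    (\prod_(i in J) ((b i)%:R : int) = ([forall i in J, b i])%:R)%R.
  case: (boolP [forall i in J, b i]) => [/forall_inP H|/forall_inPn [i iJ nb]].
    by rewrite big1 // => i /H ->.
  by rewrite (bigD1 i) //= (negbTE nb) mul0r.
have prodE' (b : I -> bool) :
    (\prod_i ((b i)%:R : int) = ([forall i, b i])%:R)%R.
  case: (boolP [forall i, b i]) => [/forallP H|/forallPn [i nb]].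
    by rewrite big1 // => i _; rewrite H.
  by rewrite (bigD1 i) //= (negbTE nb) mul0r.
rewrite cardE.
transitivity (\sum_x \prod_i (- ((A i x)%:R : int) + 1))%R.
  apply: eq_bigr => x _; rewrite -prodE'; apply: eq_bigr => i _.
  by case: (A i x); rewrite ?subrr ?oppr0 ?add0r.
under eq_bigr => x _ do rewrite (@bigA_distr int 0%R 1%R _ +%R).
rewrite exchange_big /=; apply: eq_bigr => J _.
rewrite cardE mulr_sumr; apply: eq_bigr => x _.
by rewrite -big_mkcond /= prodrN prodE.
Qed.

Local Open Scope ring_scope.

Theorem theorem2 (m n k : nat) (hm : (0 < m)%N) (hn : (0 < n)%N) (hk : (0 < k)%N)
  (X : 'I_k -> {set 'I_m}) (Y : 'I_k -> {set 'I_n})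
  (hdisj : forall i j : 'I_k, i != j -> [disjoint X i & X j])
  (lab : 'I_(n ^ m) -> {ffun 'I_m -> 'I_n}) (hlab : bijective lab) :
  (#|[set j : 'I_(n ^ m) | [forall i : 'I_k, Bmat X Y lab i j == 0%N]]|%:Z =
   \sum_(I : {set 'I_k}) (-1) ^+ #|I| * (BI X Y I)%:Z)%R.
Proof.
have hinj : injective lab by apply: bij_inj.
case: hlab => g labg glab.
have E1 : #|[set j : 'I_(n ^ m) | [forall i : 'I_k, Bmat X Y lab i j == 0%N]]| =
          #|[set f : {ffun 'I_m -> 'I_n} | [forall i, ~~ (f @: X i == Y i)]]|.
  rewrite -(card_imset _ hinj); apply: eq_card => f; rewrite [RHS]inE.
  apply/imsetP/idP => [[j Hj ->]|Hf].
    rewrite inE in Hj; apply/forallP => i; have := forallP Hj i.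
    by rewrite /Bmat mxE; case: ifP.
  exists (g f); last by rewrite glab.
  rewrite inE; apply/forallP => i; have := forallP Hf i.
  by rewrite /Bmat mxE glab; case: ifP.
rewrite E1 (incl_excl (fun i (f : {ffun 'I_m -> 'I_n}) => f @: X i == Y i)).
apply: eq_bigr => J _; congr (_ * _%:Z).
rewrite (famF (Ordinal hn) Y hdisj) /BI /U card_ord; congr (_ * _)%N.
by apply: eq_bigr => i _; rewrite surjE.
Qed.
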